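(* Let $p$ be a prime, $t\ge r(p)=:r$, and let $f_2,f_3\in\{0,1\}$ satisfy $w_2(p^t)\le f_2$ and $w_3(p^t)\le f_3$. Let $c,d\in\mathbb{Z}$. (i) If $p^{t-r+2}\nmid c$ and $p^{t-r+2}\nmid d$, then $E_{f_2,f_3}(c,d;p^t)\ne0$ implies $(c,p^t)=p^s=(d,p^t)$ for some $s$, and in this case $E_{f_2,f_3}(c,d;p^t)=p^sE_{f_2,f_3}(c/p^s,d/p^s;p^{t-s})$. (ii) If $p^{t-r+2}\mid c$ or $p^{t-r+2}\mid d$, then $E_{f_2,f_3}(c,d;p^t)\ne0$ implies $p^{t-r+1}\mid \gcd(c,d)$, and in this case $E_{f_2,f_3}(c,d;p^t)=p^{t-r+1}E_{f_2,f_3}\big(c/p^{t-r+1},d/p^{t-r+1};p^{r-1}\big)$.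
   Context: For $c,d\in\mathbb{Z}$, $q\in\mathbb{N}$: $E(c,d;q)=\sum^*_{z\bmod q}e\big(\frac{cz^3-dz^2}{q}\big)$ (sum over $z$ coprime to $q$, $e(x)=\exp(2\pi ix)$), and $E_{f_2,f_3}(c,d;q)=E(2^{f_2}c,3^{f_3}d;q)$. Also $w_2(q)=1$ if $4\mid q$ and $0$ otherwise; $w_3(q)=1$ if $9\mid q$ and $0$ otherwise. $r(2)=6$, $r(3)=5$, and $r(p)=2$ for primes $p>3$. *)

(* Defs.v *)
From Stdlib Require Import Reals ZArith Znumtheory List.
Open Scope R_scope.

(* a complex number x + i y is the pair (x, y) *)
Definition Cnum := (R * R)%type.
Definition C0 : Cnum := (0, 0).
Definition Cadd (u v : Cnum) : Cnum := (fst u + fst v, snd u + snd v).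
Definition Cscale (a : R) (u : Cnum) : Cnum := (a * fst u, a * snd u).

(* e(a/q) = exp(2 pi i a / q) *)
Definition e_frac (a q : Z) : Cnum :=
  (cos (2 * PI * IZR a / IZR q), sin (2 * PI * IZR a / IZR q)).

Definition E (c d q : Z) : Cnum :=
  fold_right Cadd C0
    (map (fun n : nat => let z := Z.of_nat n in
            if Z.eqb (Z.gcd z q) 1
            then e_frac (c * z ^ 3 - d * z ^ 2) q else C0)
         (seq 0 (Z.to_nat q))).

Definition Ef (f2 f3 c d q : Z) : Cnum := E (2 ^ f2 * c) (3 ^ f3 * d) q.

Definition w2 (q : Z) : Z := if Z.eqb (q mod 4) 0 then 1 else 0.
Definition w3 (q : Z) : Z := if Z.eqb (q mod 9) 0 then 1 else 0.

Definition rp (p : Z) : Z := if Z.eqb p 2 then 6 else if Z.eqb p 3 then 5 else 2.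

(* Main.v *)
Require Import Defs.
From Stdlib Require Import Reals ZArith Znumtheory List Lia Lra Zpow_facts.
Open Scope R_scope.

Definition Cmul (u v : Cnum) : Cnum :=
  (fst u * fst v - snd u * snd v, fst u * snd v + snd u * fst v).

Definition Ssum (f : nat -> Cnum) (n : nat) : Cnum :=
  fold_right Cadd C0 (map f (seq 0 n)).

Ltac Cring := unfold Cadd, Cscale, Cmul, C0; apply injective_projections; simpl; ring.

Lemma Ssum_0 f : Ssum f 0 = C0. Proof. reflexivity. Qed.

Lemma fold_app (l1 l2 : list Cnum) :
  fold_right Cadd C0 (l1 ++ l2) = Cadd (fold_right Cadd C0 l1) (fold_right Cadd C0 l2).
Proof.
  induction l1 as [|a l IH]; simpl.
  - destruct (fold_right Cadd C0 l2); Cring.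
  - rewrite IH. destruct a, (fold_right Cadd C0 l), (fold_right Cadd C0 l2). Cring.
Qed.

Lemma Ssum_S f n : Ssum f (S n) = Cadd (Ssum f n) (f n).
Proof.
  unfold Ssum. rewrite seq_S, map_app, fold_app. simpl.
  destruct (f n), (fold_right Cadd C0 (map f (seq 0 n))). Cring.
Qed.

Lemma Ssum_ext f g n : (forall k, (k < n)%nat -> f k = g k) -> Ssum f n = Ssum g n.
Proof.
  induction n; intros H; auto. rewrite !Ssum_S, IHn by (intros; apply H; lia).
  rewrite H by lia. reflexivity.
Qed.

Lemma Ssum_add f g n : Ssum (fun k => Cadd (f k) (g k)) n = Cadd (Ssum f n) (Ssum g n).
Proof.
  induction n. simpl. Cring. rewrite !Ssum_S, IHn.
  destruct (Ssum f n), (Ssum g n), (f n), (g n). Cring.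
Qed.

Lemma Ssum_zero f n : (forall k, (k < n)%nat -> f k = C0) -> Ssum f n = C0.
Proof.
  intros H. transitivity (Ssum (fun _ => C0) n). apply Ssum_ext; auto.
  induction n; auto. rewrite Ssum_S, IHn by (intros; apply H; lia). Cring.
Qed.

Lemma Ssum_const v n : Ssum (fun _ => v) n = Cscale (INR n) v.
Proof.
  induction n. simpl. destruct v; Cring. rewrite Ssum_S, IHn, S_INR. destruct v; Cring.
Qed.

Lemma Ssum_mul w f n : Ssum (fun k => Cmul w (f k)) n = Cmul w (Ssum f n).
Proof.
  induction n. simpl. destruct w; Cring. rewrite !Ssum_S, IHn.
  destruct w, (Ssum f n), (f n). Cring.
Qed.

Lemma Ssum_swap (F : nat -> nat -> Cnum) n m :
  Ssum (fun i => Ssum (fun j => F i j) m) n = Ssum (fun j => Ssum (fun i => F i j) n) m.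
Proof.
  induction n.
  - simpl. symmetry. apply Ssum_zero. auto.
  - rewrite Ssum_S, IHn. rewrite <- Ssum_add. apply Ssum_ext. intros. rewrite Ssum_S. auto.
Qed.

Lemma Ssum_Sl f n : Ssum f (S n) = Cadd (f 0%nat) (Ssum (fun k => f (S k)) n).
Proof.
  unfold Ssum. rewrite <- cons_seq, <- seq_shift. simpl. rewrite map_map. reflexivity.
Qed.

Lemma Ssum_plus f a b : Ssum f (a + b) = Cadd (Ssum f a) (Ssum (fun i => f (a + i)%nat) b).
Proof.
  induction b. rewrite Nat.add_0_r. simpl. destruct (Ssum f a); Cring.
  rewrite Nat.add_succ_r, !Ssum_S, IHb. destruct (Ssum f a), (Ssum (fun i => f (a + i)%nat) b), (f (a+b)%nat). Cring.
Qed.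

Lemma Ssum_block f n m :
  Ssum f (m * n) = Ssum (fun j => Ssum (fun i => f (j * n + i)%nat) n) m.
Proof.
  induction m. reflexivity.
  rewrite Ssum_S, <- IHm. replace (S m * n)%nat with (m * n + n)%nat by lia.
  apply Ssum_plus.
Qed.

Lemma e_add a b q : e_frac (a + b) q = Cmul (e_frac a q) (e_frac b q).
Proof.
  unfold e_frac, Cmul; simpl. rewrite plus_IZR.
  replace (2 * PI * (IZR a + IZR b) / IZR q) with (2 * PI * IZR a / IZR q + 2 * PI * IZR b / IZR q) by (unfold Rdiv; ring).
  rewrite cos_plus, sin_plus. apply injective_projections; simpl; ring.
Qed.

Lemma cs_int x k : cos (x + 2 * PI * IZR k) = cos x /\ sin (x + 2 * PI * IZR k) = sin x.
Proof.
  destruct (Z_le_gt_dec 0 k) as [Hk|Hk].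
  - rewrite <- (Z2Nat.id k Hk), <- INR_IZR_INZ.
    replace (x + 2 * PI * INR (Z.to_nat k)) with (x + 2 * INR (Z.to_nat k) * PI) by ring.
    split; [apply cos_period | apply sin_period].
  - assert (Hk' : (0 <= - k)%Z) by lia.
    set (y := x + 2 * PI * IZR k).
    assert (Hx : x = y + 2 * INR (Z.to_nat (- k)) * PI).
    { unfold y. rewrite INR_IZR_INZ, Z2Nat.id, opp_IZR by auto. ring. }
    rewrite Hx, cos_period, sin_period. auto.
Qed.

Lemma e_per a k q : q <> 0%Z -> e_frac (a + k * q) q = e_frac a q.
Proof.
  intros Hq. unfold e_frac.
  replace (2 * PI * IZR (a + k * q) / IZR q) with (2 * PI * IZR a / IZR q + 2 * PI * IZR k).
  2:{ rewrite plus_IZR, mult_IZR. field. apply not_0_IZR; auto. }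
  destruct (cs_int (2 * PI * IZR a / IZR q) k) as [-> ->]. auto.
Qed.

Lemma e_congr a b q : q <> 0%Z -> (q | a - b)%Z -> e_frac a q = e_frac b q.
Proof.
  intros Hq [k Hk]. replace a with (b + k * q)%Z by lia. apply e_per; auto.
Qed.

Lemma e_scale m a q : m <> 0%Z -> q <> 0%Z -> e_frac (m * a) (m * q) = e_frac a q.
Proof.
  intros Hm Hq. unfold e_frac. rewrite !mult_IZR.
  replace (2 * PI * (IZR m * IZR a) / (IZR m * IZR q)) with (2 * PI * IZR a / IZR q); auto.
  field. split; apply not_0_IZR; auto.
Qed.

Lemma e_zero q : e_frac 0 q = (1, 0).
Proof.
  unfold e_frac. replace (2 * PI * IZR 0 / IZR q) with 0 by (simpl; unfold Rdiv; ring).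
  rewrite cos_0, sin_0. auto.
Qed.

Lemma e_ne1 p L : prime p -> ~ (p | L)%Z -> e_frac L p <> (1, 0).
Proof.
  intros Hp HL H. apply HL. injection H as Hc Hs.
  assert (Hp2 := prime_ge_2 p Hp).
  set (x := 2 * PI * IZR L / IZR p) in *.
  assert (Hs2 : sin (x / 2) = 0).
  { assert (H2 := cos_2a_sin (x / 2)). replace (2 * (x / 2)) with x in H2 by field.
    nra. }
  destruct (sin_eq_0_0 _ Hs2) as [k Hk].
  exists k. apply eq_IZR. rewrite mult_IZR.
  assert (HP := PI_RGT_0). assert (Hpr : IZR p <> 0) by (apply not_0_IZR; lia).
  unfold x in Hk.
  apply (Rmult_eq_reg_l PI); [|lra].
  apply (Rmult_eq_reg_r (/ IZR p)); [| apply Rinv_neq_0_compat; auto].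
  replace (PI * IZR L * / IZR p) with (2 * PI * IZR L / IZR p / 2) by (field; auto).
  rewrite Hk. field. auto.
Qed.

Definition Csub1 (u : Cnum) : Cnum := (fst u - 1, snd u).

Lemma geom_sum p L : prime p -> ~ (p | L)%Z ->
  Ssum (fun y => e_frac (Z.of_nat y * L) p) (Z.to_nat p) = C0.
Proof.
  intros Hp HL. set (w := e_frac L p).
  assert (Hind : forall n, Cmul (Ssum (fun y => e_frac (Z.of_nat y * L) p) n) (Csub1 w)
                          = Csub1 (e_frac (Z.of_nat n * L) p)).
  { induction n.
    - simpl. rewrite e_zero. destruct w. Cring.
    - rewrite Ssum_S. replace (Z.of_nat (S n) * L)%Z with (Z.of_nat n * L + L)%Z by lia.
      rewrite e_add. fold w.
      destruct (Ssum (fun y => e_frac (Z.of_nat y * L) p) n) as [g1 g2].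
      destruct (e_frac (Z.of_nat n * L) p) as [e1 e2]. destruct w as [w1 w2].
      unfold Csub1, Cmul, Cadd in *; simpl in *.
      injection IHn as I1 I2.
      apply injective_projections; simpl; nra. }
  specialize (Hind (Z.to_nat p)).
  assert (Hp2 := prime_ge_2 p Hp).
  rewrite Z2Nat.id in Hind by lia.
  replace (p * L)%Z with (0 + L * p)%Z in Hind by ring.
  rewrite e_per, e_zero in Hind by lia.
  assert (Hw := e_ne1 p L Hp HL). fold w in Hw.
  destruct (Ssum (fun y => e_frac (Z.of_nat y * L) p) (Z.to_nat p)) as [g1 g2].
  destruct w as [w1 w2]. unfold Csub1, Cmul, C0 in *; simpl in *.
  injection Hind as I1 I2.
  assert (Hn : (w1 - 1) * (w1 - 1) + w2 * w2 <> 0).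
  { intro Z0. apply Hw. destruct (Rplus_sqr_eq_0 _ _ Z0) as [A B].
    f_equal; lra. }
  assert (E1 : g1 * ((w1 - 1) * (w1 - 1) + w2 * w2) = (w1 - 1) * (g1 * (w1 - 1) - g2 * w2) + w2 * (g1 * w2 + g2 * (w1 - 1))) by ring.
  assert (E2 : g2 * ((w1 - 1) * (w1 - 1) + w2 * w2) = - w2 * (g1 * (w1 - 1) - g2 * w2) + (w1 - 1) * (g1 * w2 + g2 * (w1 - 1))) by ring.
  rewrite I1, I2 in E1, E2.
  f_equal; [apply (Rmult_eq_reg_r ((w1 - 1) * (w1 - 1) + w2 * w2)) | apply (Rmult_eq_reg_r ((w1 - 1) * (w1 - 1) + w2 * w2))]; auto; lra.
Qed.

Lemma coprime_pow p t z : prime p -> (1 <= t)%Z ->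
  (Z.gcd z (p ^ t) = 1%Z <-> ~ (p | z)%Z).
Proof.
  intros Hp Ht. assert (Hp2 := prime_ge_2 p Hp). split.
  - intros H Hd. assert (Hd2 : (p | Z.gcd z (p ^ t))%Z).
    { apply Z.gcd_greatest; auto. replace t with (1 + (t - 1))%Z by lia.
      rewrite Z.pow_add_r by lia. exists (p ^ (t - 1))%Z. ring. }
    rewrite H in Hd2. apply Z.divide_pos_le in Hd2; lia.
  - intros H. apply Zgcd_1_rel_prime. apply rel_prime_Zpower_r; [lia|].
    apply rel_prime_sym. apply prime_rel_prime; auto.
Qed.

Lemma Cadd_cancel a x y : Cadd a x = Cadd a y -> x = y.
Proof.
  destruct a, x, y; unfold Cadd; simpl; intros H; injection H as H1 H2.
  f_equal; lra.
Qed.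

Lemma shift_inv (g : Z -> Cnum) N :
  (forall z k, g (z + k * Z.of_nat N)%Z = g z) ->
  forall h, Ssum (fun n => g (Z.of_nat n + h)%Z) N = Ssum (fun n => g (Z.of_nat n)) N.
Proof.
  intros Hper.
  assert (Hnat : forall m, Ssum (fun n => g (Z.of_nat n + Z.of_nat m)%Z) N = Ssum (fun n => g (Z.of_nat n)) N).
  { induction m.
    - apply Ssum_ext; intros. f_equal; lia.
    - rewrite <- IHm. set (f := fun n => g (Z.of_nat n + Z.of_nat m)%Z).
      assert (H1 := Ssum_S f N). rewrite Ssum_Sl in H1.
      assert (Hf : f N = f 0%nat).
      { unfold f. rewrite <- (Hper (Z.of_nat 0 + Z.of_nat m)%Z 1%Z). f_equal; lia. }
      rewrite Hf in H1.
      replace (Ssum (fun n : nat => g (Z.of_nat n + Z.of_nat (S m))%Z) N) with (Ssum (fun k => f (S k)) N).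
      2:{ apply Ssum_ext; intros; unfold f; f_equal; lia. }
      destruct (Ssum (fun k => f (S k)) N), (Ssum f N), (f 0%nat).
      unfold Cadd in H1; simpl in H1. injection H1 as H1 H2. f_equal; lra. }
  intros h. destruct N as [|N']. reflexivity.
  set (N := S N') in *.
  assert (HN : (0 < Z.of_nat N)%Z) by (unfold N; lia).
  rewrite <- (Hnat (Z.to_nat (h mod Z.of_nat N))).
  apply Ssum_ext; intros. rewrite Z2Nat.id by (apply Z.mod_pos_bound; lia).
  rewrite (Z.div_mod h (Z.of_nat N)) at 1 by lia.
  transitivity (g (Z.of_nat k + h mod Z.of_nat N + h / Z.of_nat N * Z.of_nat N)%Z); [f_equal; ring | apply Hper].
Qed.

Definition phi (C D z : Z) : Z := (C * z ^ 3 - D * z ^ 2)%Z.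

Lemma E_Ssum C D Q : E C D Q =
  Ssum (fun n => (fun z => if Z.eqb (Z.gcd z Q) 1 then e_frac (phi C D z) Q else C0) (Z.of_nat n)) (Z.to_nat Q).
Proof. reflexivity. Qed.

Lemma van p t j C D (L : Z -> Z) : prime p -> (1 <= t)%Z -> (1 <= j)%Z ->
  (forall z y, (p ^ t | phi C D (z + p ^ j * y) - phi C D z - y * p ^ (t - 1) * L z)%Z) ->
  (forall z, ~ (p | z)%Z -> ~ (p | L z)%Z) ->
  E C D (p ^ t) = C0.
Proof.
  intros Hp Ht Hj Hc HL. assert (Hp2 := prime_ge_2 p Hp).
  set (Q := (p ^ t)%Z) in *.
  assert (HQ : (0 < Q)%Z) by (unfold Q; apply Z.pow_pos_nonneg; lia).
  set (g := fun z => if Z.eqb (Z.gcd z Q) 1 then e_frac (phi C D z) Q else C0).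
  rewrite E_Ssum. fold g. set (N := Z.to_nat Q).
  assert (HN : Z.of_nat N = Q) by (unfold N; apply Z2Nat.id; lia).
  assert (Hper : forall z k, g (z + k * Z.of_nat N)%Z = g z).
  { intros z k. rewrite HN. unfold g.
    rewrite (Z.gcd_comm (z + k * Q)), Z.gcd_add_mult_diag_r, Z.gcd_comm.
    destruct (Z.gcd z Q =? 1)%Z; auto. apply e_congr; [lia|].
    exists (3 * C * z ^ 2 * k + 3 * C * z * k ^ 2 * Q + C * k ^ 3 * Q ^ 2 - 2 * D * z * k - D * k ^ 2 * Q)%Z.
    unfold phi. ring. }
  assert (Hcop : forall z y, (Z.gcd (z + p ^ j * y) Q =? 1)%Z = (Z.gcd z Q =? 1)%Z).
  { intros z y. assert (Hpj : (p | p ^ j * y)%Z).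
    { replace j with (1 + (j - 1))%Z by lia. rewrite Z.pow_add_r by lia.
      exists (p ^ (j - 1) * y)%Z. ring. }
    destruct (Z.gcd z Q =? 1)%Z eqn:E1; apply Z.eqb_eq in E1 || apply Z.eqb_neq in E1.
    - apply Z.eqb_eq. apply (coprime_pow p t) in E1; auto. apply coprime_pow; auto.
      intro H. apply E1. replace z with ((z + p ^ j * y) - p ^ j * y)%Z by ring.
      apply Z.divide_sub_r; auto.
    - apply Z.eqb_neq. intro H. apply E1. apply (coprime_pow p t) in H; auto. apply coprime_pow; auto.
      intro H'. apply H. apply Z.divide_add_r; auto. }
  set (P := Z.to_nat p).
  assert (HP : Z.of_nat P = p) by (unfold P; apply Z2Nat.id; lia).
  set (S := Ssum (fun n => g (Z.of_nat n)) N).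
  assert (H1 : Ssum (fun y => Ssum (fun n => g (Z.of_nat n + p ^ j * Z.of_nat y)%Z) N) P = Cscale (INR P) S).
  { rewrite <- Ssum_const. apply Ssum_ext. intros. apply shift_inv; auto. }
  rewrite Ssum_swap in H1.
  rewrite Ssum_zero in H1.
  2:{ intros n Hn. destruct (Z.gcd (Z.of_nat n) Q =? 1)%Z eqn:E1.
    - transitivity (Ssum (fun y => Cmul (e_frac (phi C D (Z.of_nat n)) Q) (e_frac (Z.of_nat y * L (Z.of_nat n)) p)) P).
      + apply Ssum_ext. intros y Hy. unfold g. rewrite Hcop, E1.
        rewrite (e_congr _ (phi C D (Z.of_nat n) + Z.of_nat y * p ^ (t - 1) * L (Z.of_nat n))) by (try lia; 
          replace (phi C D (Z.of_nat n + p ^ j * Z.of_nat y) - (phi C D (Z.of_nat n) + Z.of_nat y * p ^ (t - 1) * L (Z.of_nat n)))%Z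
          with (phi C D (Z.of_nat n + p ^ j * Z.of_nat y) - phi C D (Z.of_nat n) - Z.of_nat y * p ^ (t - 1) * L (Z.of_nat n))%Z by ring; apply Hc).
        rewrite e_add. f_equal.
        unfold Q. replace t with ((t - 1) + 1)%Z at 2 by ring. rewrite Z.pow_add_r, Z.pow_1_r by lia.
        replace (Z.of_nat y * p ^ (t - 1) * L (Z.of_nat n))%Z with (p ^ (t - 1) * (Z.of_nat y * L (Z.of_nat n)))%Z by ring.
        apply e_scale; [apply Z.pow_nonzero; lia | lia].
      + rewrite Ssum_mul. unfold P. rewrite geom_sum; auto.
        * destruct (e_frac (phi C D (Z.of_nat n)) Q). Cring.
        * apply HL. apply (coprime_pow p t); auto. apply Z.eqb_eq; auto.
    - apply Ssum_zero. intros y Hy. unfold g. rewrite Hcop, E1. auto. }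
  change (S = C0). clearbody S.
  destruct S as [s1 s2]. unfold Cscale, C0 in H1. simpl in H1. injection H1 as I1 I2.
  assert (INR P <> 0) by (apply not_0_INR; lia).
  unfold C0. f_equal; [apply (Rmult_eq_reg_l (INR P)) | apply (Rmult_eq_reg_l (INR P))]; auto; lra.
Qed.

Lemma gcd_bool_iff p t z t' z' : prime p -> (1 <= t)%Z -> (1 <= t')%Z ->
  ((p | z) <-> (p | z'))%Z -> (Z.gcd z (p ^ t) =? 1)%Z = (Z.gcd z' (p ^ t') =? 1)%Z.
Proof.
  intros Hp Ht Ht' Hiff.
  destruct (Z.gcd z' (p ^ t') =? 1)%Z eqn:E1; apply Z.eqb_eq in E1 || apply Z.eqb_neq in E1.
  - apply Z.eqb_eq. apply (coprime_pow p t') in E1; auto. apply coprime_pow; auto. tauto.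
  - apply Z.eqb_neq. intro H. apply E1. apply (coprime_pow p t) in H; auto. apply coprime_pow; auto. tauto.
Qed.

Lemma reduce p t k C D : prime p -> (0 <= k < t)%Z ->
  E (p ^ k * C) (p ^ k * D) (p ^ t) = Cscale (IZR (p ^ k)) (E C D (p ^ (t - k))).
Proof.
  intros Hp Hk. assert (Hp2 := prime_ge_2 p Hp).
  set (M := (p ^ k)%Z). set (Q := (p ^ (t - k))%Z).
  assert (HM : (0 < M)%Z) by (unfold M; apply Z.pow_pos_nonneg; lia).
  assert (HQ : (0 < Q)%Z) by (unfold Q; apply Z.pow_pos_nonneg; lia).
  assert (Ht : (p ^ t = M * Q)%Z) by (unfold M, Q; rewrite <- Z.pow_add_r by lia; f_equal; ring).
  assert (HpQ : (p | Q)%Z).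
  { unfold Q. replace (t - k)%Z with (1 + (t - k - 1))%Z by lia. rewrite Z.pow_add_r by lia.
    exists (p ^ (t - k - 1))%Z. ring. }
  rewrite (E_Ssum _ _ (p ^ t)), (E_Ssum C D Q). rewrite Ht.
  rewrite Z2Nat.inj_mul by lia. rewrite Ssum_block.
  set (N := Z.to_nat Q). assert (HN : Z.of_nat N = Q) by (unfold N; lia).
  set (S' := Ssum _ N).
  replace (IZR M) with (INR (Z.to_nat M)) by (rewrite INR_IZR_INZ, Z2Nat.id; [reflexivity|lia]). rewrite <- Ssum_const.
  apply Ssum_ext. intros j Hj. apply Ssum_ext. intros i Hi.
  rewrite <- Ht.
  assert (Hiff : (p | Z.of_nat (j * N + i))%Z <-> (p | Z.of_nat i)%Z).
  { rewrite Nat2Z.inj_add, Nat2Z.inj_mul, HN; split; intro H.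
    - replace (Z.of_nat i) with (Z.of_nat j * Q + Z.of_nat i - Z.of_nat j * Q)%Z by ring.
      apply Z.divide_sub_r; auto; apply Z.divide_mul_r; auto.
    - apply Z.divide_add_r; auto; apply Z.divide_mul_r; auto. }
  rewrite (gcd_bool_iff p t _ (t - k) (Z.of_nat i)) by (auto; lia).
  fold Q. destruct (Z.gcd (Z.of_nat i) Q =? 1)%Z; auto.
  rewrite Ht. set (x := Z.of_nat (j * N + i)).
  replace (phi (M * C) (M * D) x) with (M * phi C D x)%Z by (unfold phi; ring).
  rewrite e_scale by lia. apply e_congr; [lia|].
  unfold x. rewrite Nat2Z.inj_add, Nat2Z.inj_mul, HN.
  exists (C * Z.of_nat j * (3 * Z.of_nat i ^ 2 + 3 * Z.of_nat i * Z.of_nat j * Q + Z.of_nat j ^ 2 * Q ^ 2)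
          - D * Z.of_nat j * (2 * Z.of_nat i + Z.of_nat j * Q))%Z.
  unfold phi. ring.
Qed.

Lemma not_div_mul p a b : prime p -> ~ (p | a)%Z -> ~ (p | b)%Z -> ~ (p | a * b)%Z.
Proof. intros Hp Ha Hb H. destruct (prime_mult p Hp a b H); auto. Qed.

Lemma not_div_small p a : (0 < a < p)%Z -> ~ (p | a)%Z.
Proof. intros Ha H. apply Z.divide_pos_le in H; lia. Qed.

Lemma pow_split p t k : (0 <= k <= t)%Z -> (p ^ t = p ^ (t - k) * p ^ k)%Z.
Proof. intros. rewrite <- Z.pow_add_r by lia. f_equal; ring. Qed.

Ltac smallnd := first [ apply not_div_small; lia | let kk := fresh in let Hk := fresh in intros [kk Hk]; lia ].
Ltac fin H2v H3v := first [ assumption | smallnd | destruct H2v as [R|R]; rewrite R; smallnd | destruct H3v as [R|R]; rewrite R; smallnd ].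

Lemma base_van p t f2 f3 c d : prime p -> (rp p <= t)%Z ->
  (f2 = 0 \/ f2 = 1)%Z -> (f3 = 0 \/ f3 = 1)%Z ->
  (p = 2 -> f2 = 1)%Z -> (p = 3 -> f3 = 1)%Z ->
  ((~ (p | c) /\ (p | d)) \/ ((p | c) /\ ~ (p | d)))%Z ->
  E (2 ^ f2 * c) (3 ^ f3 * d) (p ^ t) = C0.
Proof.
  intros Hp Ht H2 H3 Hf2 Hf3 Hcd. assert (Hp2 := prime_ge_2 p Hp).
  assert (H2v : (2 ^ f2 = 1 \/ 2 ^ f2 = 2)%Z) by (destruct H2; subst; auto).
  assert (H3v : (3 ^ f3 = 1 \/ 3 ^ f3 = 3)%Z) by (destruct H3; subst; auto).
  destruct (Z.eq_dec p 2) as [E2|N2]; [|destruct (Z.eq_dec p 3) as [E3|N3]].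
  -
    subst p. rewrite (Hf2 eq_refl), Z.pow_1_r. unfold rp in Ht. simpl in Ht.
    set (D := (3 ^ f3 * d)%Z).
    assert (HD : ((2 | D) <-> (2 | d))%Z).
    { unfold D. split; intro H.
      - destruct (prime_mult 2 Hp _ _ H) as [H'|]; auto.
        exfalso; destruct H3v as [R|R]; rewrite R in H'; destruct H' as [kk Hk]; lia.
      - apply Z.divide_mul_r; auto. }
    apply (van 2 t (t - 2) _ _ (fun z => 3 * c * z ^ 2 - D * z)%Z); auto; try lia.
    + intros z y. rewrite (pow_split 2 t 4), (pow_split 2 (t - 2) 2), (pow_split 2 (t - 1) 3) by lia.
      replace (t - 2 - 2)%Z with (t - 4)%Z by ring. replace (t - 1 - 3)%Z with (t - 4)%Z by ring.
      set (P := (2 ^ (t - 4))%Z).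
      exists (P * y ^ 2 * (6 * c * z - D) + 8 * c * P ^ 2 * y ^ 3)%Z. unfold phi. ring.
    + intros z Hz HL. destruct Hcd as [[Hc Hd] | [Hc Hd]].
      * assert (H : (2 | 3 * c * z ^ 2)%Z).
        { replace (3 * c * z ^ 2)%Z with ((3 * c * z ^ 2 - D * z) + D * z)%Z by ring.
          apply Z.divide_add_r; auto. apply Z.divide_mul_l. apply HD; auto. }
        revert H. replace (3 * c * z ^ 2)%Z with (3 * c * z * z)%Z by ring.
        repeat apply not_div_mul; auto; fin H2v H3v.
      * assert (H : (2 | D * z)%Z).
        { replace (D * z)%Z with (3 * c * z ^ 2 - (3 * c * z ^ 2 - D * z))%Z by ring.
          apply Z.divide_sub_r; auto. replace (3 * c * z ^ 2)%Z with (c * (3 * z ^ 2))%Z by ring.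
          apply Z.divide_mul_l; auto. }
        revert H. repeat apply not_div_mul; auto; fin H2v H3v.
  -
    subst p. rewrite (Hf3 eq_refl), Z.pow_1_r. unfold rp in Ht. simpl in Ht.
    set (C := (2 ^ f2 * c)%Z).
    assert (HC : ((3 | C) <-> (3 | c))%Z).
    { unfold C. split; intro H.
      - destruct (prime_mult 3 Hp _ _ H) as [H'|]; auto.
        exfalso; destruct H2v as [R|R]; rewrite R in H'; revert H'; apply not_div_small; lia.
      - apply Z.divide_mul_r; auto. }
    apply (van 3 t (t - 2) _ _ (fun z => C * z ^ 2 - 2 * d * z)%Z); auto; try lia.
    + intros z y. rewrite (pow_split 3 t 3), (pow_split 3 (t - 2) 1), (pow_split 3 (t - 1) 2) by lia.
      replace (t - 2 - 1)%Z with (t - 3)%Z by ring. replace (t - 1 - 2)%Z with (t - 3)%Z by ring.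
      set (P := (3 ^ (t - 3))%Z).
      exists (P * y ^ 2 * (C * z - d) + C * P ^ 2 * y ^ 3)%Z. unfold phi. ring.
    + intros z Hz HL. destruct Hcd as [[Hc Hd] | [Hc Hd]].
      * assert (H : (3 | C * z ^ 2)%Z).
        { replace (C * z ^ 2)%Z with ((C * z ^ 2 - 2 * d * z) + d * (2 * z))%Z by ring.
          apply Z.divide_add_r; auto. apply Z.divide_mul_l; auto. }
        revert H. replace (C * z ^ 2)%Z with (C * z * z)%Z by ring.
        repeat apply not_div_mul; auto; fin H2v H3v.
      * assert (H : (3 | 2 * d * z)%Z).
        { replace (2 * d * z)%Z with (C * z ^ 2 - (C * z ^ 2 - 2 * d * z))%Z by ring.
          apply Z.divide_sub_r; auto. apply Z.divide_mul_l. apply HC; auto. }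
        revert H. repeat apply not_div_mul; auto; fin H2v H3v.
  -
    assert (Hrp : rp p = 2%Z).
    { unfold rp. apply Z.eqb_neq in N2. apply Z.eqb_neq in N3. rewrite N2, N3. auto. }
    rewrite Hrp in Ht. assert (Hp4 : (4 <= p)%Z).
    { destruct (Z.eq_dec p 2); [lia|]. destruct (Z.eq_dec p 3); lia. }
    set (C := (2 ^ f2 * c)%Z). set (D := (3 ^ f3 * d)%Z).
    assert (HC : ((p | C) <-> (p | c))%Z).
    { unfold C. split; intro H.
      - destruct (prime_mult p Hp _ _ H) as [H'|]; auto.
        exfalso; destruct H2v as [R|R]; rewrite R in H'; revert H'; apply not_div_small; lia.
      - apply Z.divide_mul_r; auto. }
    assert (HD : ((p | D) <-> (p | d))%Z).
    { unfold D. split; intro H.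
      - destruct (prime_mult p Hp _ _ H) as [H'|]; auto.
        exfalso; destruct H3v as [R|R]; rewrite R in H'; revert H'; apply not_div_small; lia.
      - apply Z.divide_mul_r; auto. }
    apply (van p t (t - 1) _ _ (fun z => 3 * C * z ^ 2 - 2 * D * z)%Z); auto; try lia.
    + intros z y. rewrite (pow_split p t 2), (pow_split p (t - 1) 1) by lia.
      replace (t - 1 - 1)%Z with (t - 2)%Z by ring.
      set (P := (p ^ (t - 2))%Z).
      exists (P * y ^ 2 * (3 * C * z - D) + C * P ^ 2 * p * y ^ 3)%Z. unfold phi. ring.
    + intros z Hz HL. destruct Hcd as [[Hc Hd] | [Hc Hd]].
      * assert (H : (p | 3 * C * z ^ 2)%Z).
        { replace (3 * C * z ^ 2)%Z with ((3 * C * z ^ 2 - 2 * D * z) + D * (2 * z))%Z by ring.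
          apply Z.divide_add_r; auto. apply Z.divide_mul_l. apply HD; auto. }
        revert H. replace (3 * C * z ^ 2)%Z with (3 * C * z * z)%Z by ring.
        repeat apply not_div_mul; auto; fin H2v H3v.
      * assert (H : (p | 2 * D * z)%Z).
        { replace (2 * D * z)%Z with (3 * C * z ^ 2 - (3 * C * z ^ 2 - 2 * D * z))%Z by ring.
          apply Z.divide_sub_r; auto. replace (3 * C * z ^ 2)%Z with (C * (3 * z ^ 2))%Z by ring.
          apply Z.divide_mul_l. apply HC; auto. }
        revert H. repeat apply not_div_mul; auto; fin H2v H3v.
Qed.

Lemma pow_div_mono p a b x : (0 <= a <= b)%Z -> (p ^ b | x)%Z -> (p ^ a | x)%Z.
Proof.
  intros Hab H. apply Z.divide_trans with (p ^ b)%Z; auto.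
  rewrite (pow_split p b a) by lia. apply Z.divide_mul_r. apply Z.divide_refl.
Qed.

Lemma val_exists p c : prime p -> forall n, (0 <= n)%Z -> ~ (p ^ n | c)%Z ->
  exists a, (0 <= a < n)%Z /\ (p ^ a | c)%Z /\ ~ (p ^ (a + 1) | c)%Z.
Proof.
  intros Hp n Hn0. pattern n. apply natlike_ind; [| | exact Hn0].
  - intros H. exfalso. apply H. simpl. apply Z.divide_1_l.
  - intros x Hn IH H. destruct (Zdivide_dec (p ^ x) c) as [Hd|Hd].
    + exists x. repeat split; auto; lia.
    + destruct (IH Hd) as [a [Ha1 Ha2]]. exists a. split; [lia | auto].
Qed.

Lemma gcd_val p t a c : prime p -> (0 <= a <= t)%Z -> (p ^ a | c)%Z -> ~ (p ^ (a + 1) | c)%Z ->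
  Z.gcd c (p ^ t) = (p ^ a)%Z.
Proof.
  intros Hp Ha [q Hq] Hn. assert (Hp2 := prime_ge_2 p Hp).
  assert (Hpq : ~ (p | q)%Z).
  { intros [m Hm]. apply Hn. exists m. rewrite Hq, Hm, Z.pow_add_r by lia. ring. }
  rewrite Hq, (pow_split p t a) by lia.
  rewrite (Z.mul_comm q), (Z.mul_comm (p ^ (t - a))), Z.gcd_mul_mono_l.
  rewrite Z.abs_eq by (apply Z.pow_nonneg; lia).
  destruct (Z.eq_dec a t) as [->|Hne].
  - rewrite Z.sub_diag, Z.pow_0_r, Z.gcd_1_r. ring.
  - rewrite (proj2 (coprime_pow p (t - a) q Hp ltac:(lia)) Hpq). ring.
Qed.

Lemma Ef_reduce p t k f2 f3 c d : prime p -> (0 <= k < t)%Z -> (p ^ k | c)%Z -> (p ^ k | d)%Z ->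
  Ef f2 f3 c d (p ^ t) = Cscale (IZR (p ^ k)) (Ef f2 f3 (c / p ^ k) (d / p ^ k) (p ^ (t - k))).
Proof.
  intros Hp Hk [qc Hc] [qd Hd]. assert (Hp2 := prime_ge_2 p Hp).
  assert (Hpk : (p ^ k <> 0)%Z) by (apply Z.pow_nonzero; lia).
  subst c d. rewrite !Z.div_mul by auto. unfold Ef.
  replace (2 ^ f2 * (qc * p ^ k))%Z with (p ^ k * (2 ^ f2 * qc))%Z by ring.
  replace (3 ^ f3 * (qd * p ^ k))%Z with (p ^ k * (3 ^ f3 * qd))%Z by ring.
  apply reduce; auto.
Qed.

Lemma div_quot p k c : prime p -> (0 <= k)%Z -> (p ^ k | c)%Z ->
  ((p | c / p ^ k) <-> (p ^ (k + 1) | c))%Z.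
Proof.
  intros Hp Hk [q Hq]. assert (Hp2 := prime_ge_2 p Hp).
  assert (Hpk : (p ^ k <> 0)%Z) by (apply Z.pow_nonzero; lia).
  subst c. rewrite Z.div_mul by auto. rewrite Z.pow_add_r, Z.pow_1_r by lia. split.
  - intros [m Hm]. exists m. subst q. ring.
  - intros [m Hm]. exists m. apply (Z.mul_reg_r _ _ (p ^ k)); auto. rewrite Hm. ring.
Qed.

Lemma rp_ge2 p : (2 <= rp p)%Z.
Proof. unfold rp. destruct (p =? 2)%Z; [lia|]. destruct (p =? 3)%Z; lia. Qed.

Lemma key_van p t f2 f3 c d k : prime p ->
  (f2 = 0 \/ f2 = 1)%Z -> (f3 = 0 \/ f3 = 1)%Z ->
  (p = 2 -> f2 = 1)%Z -> (p = 3 -> f3 = 1)%Z ->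
  (0 <= k <= t - rp p)%Z -> (p ^ k | c)%Z -> (p ^ k | d)%Z ->
  ((~ (p ^ (k + 1) | c) /\ (p ^ (k + 1) | d)) \/ ((p ^ (k + 1) | c) /\ ~ (p ^ (k + 1) | d)))%Z ->
  Ef f2 f3 c d (p ^ t) = C0.
Proof.
  intros Hp H2 H3 F2 F3 Hk Hc Hd Hcd. assert (Hr := rp_ge2 p).
  rewrite (Ef_reduce p t k) by (auto; lia).
  unfold Ef at 1. rewrite base_van; auto.
  - unfold Cscale, C0; simpl. f_equal; ring.
  - lia.
  - rewrite !div_quot by (auto; lia). tauto.
Qed.

Close Scope R_scope.

Theorem lemma4p4 (p t f2 f3 c d : Z) :
  prime p -> (rp p <= t)%Z ->
  (f2 = 0 \/ f2 = 1)%Z -> (f3 = 0 \/ f3 = 1)%Z ->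
  (w2 (p ^ t) <= f2)%Z -> (w3 (p ^ t) <= f3)%Z ->
  ( (~ (p ^ (t - rp p + 2) | c)%Z /\ ~ (p ^ (t - rp p + 2) | d)%Z) ->
    Ef f2 f3 c d (p ^ t) <> C0 ->
    exists s : Z, (0 <= s)%Z /\
      Z.gcd c (p ^ t) = (p ^ s)%Z /\ Z.gcd d (p ^ t) = (p ^ s)%Z /\
      Ef f2 f3 c d (p ^ t)
      = Cscale (IZR (p ^ s)) (Ef f2 f3 (c / p ^ s) (d / p ^ s) (p ^ (t - s))) ) /\
  ( ((p ^ (t - rp p + 2) | c)%Z \/ (p ^ (t - rp p + 2) | d)%Z) ->
    Ef f2 f3 c d (p ^ t) <> C0 ->
    (p ^ (t - rp p + 1) | Z.gcd c d)%Z /\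
    Ef f2 f3 c d (p ^ t)
    = Cscale (IZR (p ^ (t - rp p + 1)))
        (Ef f2 f3 (c / p ^ (t - rp p + 1)) (d / p ^ (t - rp p + 1)) (p ^ (rp p - 1))) ).
Proof.
  intros Hp Ht H2 H3 Hw2 Hw3. assert (Hr := rp_ge2 p). assert (Hp2 := prime_ge_2 p Hp).
  assert (F2 : (p = 2 -> f2 = 1)%Z).
  { intros ->. unfold rp in Ht; simpl in Ht. unfold w2 in Hw2.
    rewrite (pow_split 2 t 2), Z.mod_mul in Hw2 by lia. simpl in Hw2. lia. }
  assert (F3 : (p = 3 -> f3 = 1)%Z).
  { intros ->. unfold rp in Ht; simpl in Ht. unfold w3 in Hw3.
    rewrite (pow_split 3 t 2), Z.mod_mul in Hw3 by lia. simpl in Hw3. lia. }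
  set (r := rp p) in *.
  assert (KV := fun k => key_van p t f2 f3 c d k Hp H2 H3 F2 F3).
  fold r in KV.
  split.
  - intros [Hnc Hnd] HE.
    destruct (val_exists p c Hp (t - r + 2) ltac:(lia) Hnc) as [a [Ha [Hac Hac']]].
    destruct (val_exists p d Hp (t - r + 2) ltac:(lia) Hnd) as [b [Hb [Hbd Hbd']]].
    destruct (Z.lt_total a b) as [Hab|[Hab|Hab]].
    + exfalso. apply HE. apply (KV a); try lia; auto.
      * apply (pow_div_mono p a b); auto; lia.
      * left. split; auto. apply (pow_div_mono p (a + 1) b); auto; lia.
    + subst b. exists a. repeat split; try lia.
      * apply gcd_val; auto; lia.
      * apply gcd_val; auto; lia.
      * apply Ef_reduce; auto; lia.
    + exfalso. apply HE. apply (KV b); try lia; auto.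
      * apply (pow_div_mono p b a); auto; lia.
      * right. split; auto. apply (pow_div_mono p (b + 1) a); auto; lia.
  - intros Hcd HE.
    assert (Hboth : (p ^ (t - r + 1) | c)%Z /\ (p ^ (t - r + 1) | d)%Z).
    { destruct Hcd as [Hc|Hd].
      - split. apply (pow_div_mono p _ (t - r + 2)); auto; lia.
        destruct (Zdivide_dec (p ^ (t - r + 1)) d) as [Hd|Hd]; auto.
        destruct (val_exists p d Hp (t - r + 1) ltac:(lia) Hd) as [b [Hb [Hbd Hbd']]].
        exfalso. apply HE. apply (KV b); try lia; auto.
        + apply (pow_div_mono p b (t - r + 2)); auto; lia.
        + right. split; auto. apply (pow_div_mono p (b + 1) (t - r + 2)); auto; lia.
      - split. 2: apply (pow_div_mono p _ (t - r + 2)); auto; lia.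
        destruct (Zdivide_dec (p ^ (t - r + 1)) c) as [Hc|Hc]; auto.
        destruct (val_exists p c Hp (t - r + 1) ltac:(lia) Hc) as [a [Ha [Hac Hac']]].
        exfalso. apply HE. apply (KV a); try lia; auto.
        + apply (pow_div_mono p a (t - r + 2)); auto; lia.
        + left. split; auto. apply (pow_div_mono p (a + 1) (t - r + 2)); auto; lia. }
    destruct Hboth as [Hc Hd]. split.
    + apply Z.gcd_greatest; auto.
    + replace (r - 1)%Z with (t - (t - r + 1))%Z by ring. apply Ef_reduce; auto; lia.
Qed.
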